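(* In a single-item environment with a single real bidder whose value is drawn from the exponential distribution with mean $1$, for any $\epsilon>0$ the Deferred-Revelation Auction (DRA) over a public ledger, as described in the context, is not credible for the collateral $f=1-\epsilon$.
   Context: The bidder is quasi-linear; the exponential distribution with mean $1$ has CDF $1-e^{-t}$, virtual value $\varphi(v)=v-1$, monopoly reserve $1$. DRA over a public ledger (visible to all) with a perfectly hiding, perfectly binding, non-malleable commitment scheme: (1) every participant (the real bidder and any fake bids fabricated by the auctioneer) commits to an identifier and a bid and deposits collateral $f$; the auctioneer declares a matroid feasibility constraint $\hat{\mathcal{F}}$ and distributions $\hat D_j$ (virtual values $\hat\varphi_j$) for all committed bids; (2) each committed bid is revealed or concealed, and collateral of concealed bids is burnt; (3) among revealed bids, the set $S\in\hat{\mathcal{F}}$ maximizing $\sum_{i\in S}\hat\varphi_i(b_i)$ (lexicographic tie-breaking) is allocated, each allocated bidder paying its critical bid. The auctioneer may fabricate bids, misreport distributions and constraint (keeping the allocated real bidders feasible in the true constraint), and choose which fake bids to conceal after seeing revealed real bids. Its revenue is the real bidder's payment minus burnt collateral of its concealed fake bids. The DRA is credible for collateral $f$ if, when the real bidder bids truthfully, the auctioneer maximizes expected revenue by fabricating no bids and reporting the true distribution and constraint. *)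

(* Defs.v *)
From HB Require Import structures.
From mathcomp Require Import all_boot all_order all_algebra.
From mathcomp Require Import all_classical all_reals all_analysis.
Set Implicit Arguments. Unset Strict Implicit. Unset Printing Implicit Defensive.
Import Order.TTheory GRing.Theory Num.Theory.
Import numFieldNormedType.Exports.
Local Open Scope ring_scope.

Record dist (R : realType) := Dist {
  pdf : R -> R;
  pdf_ge0 : forall x, 0 <= pdf x;
  pdf_meas : measurable_fun setT%classic pdf;
  pdf_int1 : (\int[lebesgue_measure]_x (pdf x)%:E = 1)%E }.

Definition cdf (R : realType) (D : dist R) (x : R) : R :=
  fine (\int[lebesgue_measure]_(t in `]-oo, x]) (pdf D t)%:E)%E.

(* Myerson virtual value  phi(b) = b - (1 - F(b)) / f(b)
   (MathComp convention: division by 0 yields 0). *)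
Definition vval (R : realType) (D : dist R) (b : R) : R :=
  b - (1 - cdf D b) / pdf D b.

Definition exp1 (R : realType) : dist R :=
  @Dist R (exponential_pdf 1)
    (fun x => exponential_pdf_ge0 ler01 x)
    (@measurable_exponential_pdf R 1)
    (integral_exponential_pdf ltr01).

Definition is_matroid (n : nat) (I : {set 'I_n} -> bool) : Prop :=
  [/\ I (finset.set0 : {set 'I_n}),
      (forall A B : {set 'I_n}, B \subset A -> I A -> I B) &
      (forall A B : {set 'I_n}, I A -> I B -> (#|A| < #|B|)%N ->
          exists2 x, x \in B :\: A & I (x |: A))].

Definition lex_before (n : nat) (S T : {set 'I_n}) : bool :=
  [exists i, [&& i \in S, i \notin T &
       [forall j : 'I_n, ((j < i)%N) ==> ((j \in S) == (j \in T))]]].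

Section Allocation.
Variables (R : realType) (n : nat).
Variables (feas : {set 'I_n} -> bool) (decl : 'I_n -> dist R).

Definition weight (b : 'I_n -> R) (S : {set 'I_n}) : R :=
  \sum_(i in S) vval (decl i) (b i).

Definition candidate (rev : {set 'I_n}) (S : {set 'I_n}) : bool :=
  feas S && (S \subset rev).

Definition chosen (b : 'I_n -> R) (rev : {set 'I_n}) (S : {set 'I_n}) : bool :=
  [&& candidate rev S,
      [forall T, candidate rev T ==> (weight b T <= weight b S)] &
      [forall T, [&& candidate rev T, weight b T == weight b S & T != S]
                    ==> lex_before S T]].

Definition alloc (b : 'I_n -> R) (rev : {set 'I_n}) : {set 'I_n} :=
  odflt finset.set0 [pick S | chosen b rev S].

Definition upd (b : 'I_n -> R) (i : 'I_n) (x : R) : 'I_n -> R :=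
  fun j => if j == i then x else b j.

Definition critical (b : 'I_n -> R) (rev : {set 'I_n}) (i : 'I_n) : R :=
  inf [set x : R | 0 <= x /\ i \in alloc (upd b i x) rev]%classic.

End Allocation.

(* np committed bids, with identifiers 'I_np; the real bidder has       *)
(* identifier [real] (its position among the identifiers is determined  *)
(* by the identifiers the auctioneer chooses for the fakes); all other  *)
(* identifiers are fake bids fabricated by the auctioneer.              *)
Record strategy (R : realType) := Strategy {
  np : nat;
  real : 'I_np;
  fbid : 'I_np -> R;                   (* committed fake bids (value at [real] unused) *)
  fbid_ge0 : forall i, 0 <= fbid i;
  decl : 'I_np -> dist R;
  feas : {set 'I_np} -> bool;
  feas_matroid : is_matroid feas;
  conceal : R -> {set 'I_np}           (* fakes concealed, after seeing the revealed real bid *)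
}.
Arguments np {R} s.
Arguments real {R} s.
Arguments fbid {R} s _.
Arguments decl {R} s _.
Arguments feas {R} s _.
Arguments conceal {R} s _.

Section Outcome.
Variables (R : realType) (s : strategy R).

Definition bids (v : R) : 'I_(np s) -> R :=
  fun i => if i == real s then v else fbid s i.

Definition concealed (v : R) : {set 'I_(np s)} := conceal s v :\ real s.

Definition revealed (v : R) : {set 'I_(np s)} := ~: concealed v.

Definition allocation (v : R) : {set 'I_(np s)} :=
  alloc (feas s) (decl s) (bids v) (revealed v).

Definition real_payment (v : R) : R :=
  if real s \in allocation v
  then critical (feas s) (decl s) (bids v) (revealed v) (real s) else 0.

(* auctioneer revenue with collateral f: real payment minus burnt collateral *)
Definition revenue (f : R) (v : R) : R :=
  real_payment v - f * (#|concealed v|)%:R.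

Definition true_feasible : Prop :=
  forall v, 0 <= v -> (#|allocation v :&: [set real s]| <= 1)%N.

(* expected revenue when the real value is Exp(1) and bids truthfully *)
Definition exp_revenue (f : R) : \bar R :=
  (\int[lebesgue_measure]_v (revenue f v * exponential_pdf 1 v)%:E)%E.

End Outcome.

Definition honest (R : realType) : strategy R.
Proof.
refine (@Strategy R 1 ord0 (fun _ => 0) (fun _ => lexx 0) (fun _ => exp1 R)
          (fun S => (#|S| <= 1)%N) _ (fun _ => finset.set0)).
split.
- by rewrite finset.cards0.
- by move=> A B /subset_leq_card AB HA; exact: leq_trans AB HA.
- move=> A B HA HB AB.
  have A0 : #|A| = 0%N by apply/eqP; rewrite -leqn0 -ltnS; exact: leq_trans AB HB.
  have : (0 < #|B|)%N by move: AB; rewrite A0.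
  case/card_gt0P => x xB; exists x.
  + rewrite finset.in_setD xB andbT; apply/negP => xA.
    have : (0 < #|A|)%N by apply/card_gt0P; exists x.
    by rewrite A0.
  + by rewrite (_ : A = finset.set0) ?finset.setU0 ?finset.cards1 //; apply/eqP; rewrite -finset.cards_eq0 A0.
Defined.

Definition credible (R : realType) (f : R) : Prop :=
  forall s : strategy R, true_feasible s ->
    measurable_fun setT%classic (revenue s f) ->
    (exp_revenue s f <= exp_revenue (honest R) f)%E.

(* Main.v *)
Require Import Defs.
From HB Require Import structures.
From mathcomp Require Import all_boot all_order all_algebra.
From mathcomp Require Import all_classical all_reals all_analysis.
From mathcomp Require Import measurable_realfun ring lra.
Import Order.TTheory GRing.Theory Num.Theory.
Local Open Scope ring_scope.

Module Helpers.
Set Implicit Arguments. Unset Strict Implicit. Unset Printing Implicit Defensive.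
Import numFieldNormedType.Exports.

Section Alloc.
Variables (R : realType) (n : nat) (feas : {set 'I_n} -> bool) (dec : 'I_n -> dist R).

Lemma lex_antisym (S T : {set 'I_n}) : lex_before S T -> lex_before T S -> False.
Proof.
case/existsP => i /and3P[iS iT /forallP hi].
case/existsP => k /and3P[kT kS /forallP hk].
case: (ltngtP i k) => [ik|ki|ik].
- by move: (hk i); rewrite ik iS (negbTE iT).
- by move: (hi k); rewrite ki kT (negbTE kS).
- by have /val_inj ik' := ik; subst k; rewrite iS in kS.
Qed.

Lemma chosen_uniq b rev S T :
  chosen feas dec b rev S -> chosen feas dec b rev T -> S = T.
Proof.
case/and3P => cS /forallP mS /forallP tS.
case/and3P => cT /forallP mT /forallP tT.
apply/eqP; apply/negPn/negP => ST.
have wST : weight dec b T == weight dec b S.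
  by rewrite eq_le (implyP (mS T) cT) (implyP (mT S) cS).
have TS : T != S by rewrite eq_sym.
have h1 := implyP (tS T) (introT and3P (And3 cT wST TS)).
have h2 : lex_before T S.
  by apply: (implyP (tT S)); rewrite cS eq_sym wST /=.
exact: lex_antisym h1 h2.
Qed.

Lemma alloc_eq b rev S : chosen feas dec b rev S -> alloc feas dec b rev = S.
Proof.
move=> hS; rewrite /alloc; case: pickP => [T hT|h]; first exact: chosen_uniq hT hS.
by rewrite h in hS.
Qed.
End Alloc.

Definition feas1 (n : nat) := fun S : {set 'I_n} => (#|S| <= 1)%N.

Section Single.
Variables (R : realType) (n : nat) (dec : 'I_n -> dist R).
Variables (b : 'I_n -> R) (rev : {set 'I_n}).
Let w i := vval (dec i) (b i).

Lemma ordF (k i : 'I_n) : (k < i)%N -> (k == i) = false.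
Proof. by move=> h; apply/negbTE; rewrite -(inj_eq val_inj) /= neq_ltn h. Qed.

Lemma weight0 : weight dec b finset.set0 = 0.
Proof. by rewrite /weight big_set0. Qed.

Lemma weight1 i : weight dec b [set i] = w i.
Proof. by rewrite /weight big_set1. Qed.

Lemma cand_cases T : candidate (@feas1 n) rev T ->
  T = finset.set0 \/ exists2 i, i \in rev & T = [set i].
Proof.
case/andP => hc hsub; move: hc; rewrite /feas1 leq_eqVlt ltnS leqn0.
case/orP => [/cards1P [i Ti]|/eqP /cards0_eq ->]; last by left.
right; exists i => //; rewrite Ti finset.sub1set in hsub; exact: hsub.
Qed.

Lemma chosen_set0 : (forall i, i \in rev -> w i < 0) ->
  chosen (@feas1 n) dec b rev finset.set0.
Proof.
move=> hw; apply/and3P; split.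
- by rewrite /candidate /feas1 cards0 finset.sub0set.
- apply/forallP => T; apply/implyP => /cand_cases [->|[i ir ->]].
    by rewrite weight0.
  by rewrite weight1 weight0 ltW // hw.
- apply/forallP => T; apply/implyP => /and3P[/cand_cases [->|[i ir ->]] hT hne].
    by rewrite eqxx in hne.
  by move: hT; rewrite weight1 weight0 lt_eqF // hw.
Qed.

Lemma chosen_set1 i : i \in rev -> 0 <= w i ->
  (forall j, j \in rev -> j != i -> (w j < w i) || ((w j == w i) && (i < j)%N)) ->
  chosen (@feas1 n) dec b rev [set i].
Proof.
move=> ir wi hj; apply/and3P; split.
- by rewrite /candidate /feas1 cards1 finset.sub1set ir.
- apply/forallP => T; apply/implyP => /cand_cases [->|[j jr ->]].
    by rewrite weight0 weight1.
  rewrite !weight1; have [->|ji] := eqVneq j i; first by [].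
  by case/orP: (hj j jr ji) => [/ltW //|/andP[/eqP -> _]].
- apply/forallP => T; apply/implyP => /and3P[/cand_cases [->|[j jr ->]] hT hne].
    apply/existsP; exists i; rewrite set11 finset.in_set0 /=.
    by apply/forallP => k; apply/implyP => ki; rewrite finset.in_set1 finset.in_set0 (ordF ki).
  have ji : j != i by apply: contraNneq hne => ->.
  move: hT; rewrite !weight1 => hT.
  case/orP: (hj j jr ji) => [|/andP[_ ij]]; first by rewrite lt_neqAle hT.
  apply/existsP; exists i; rewrite set11 finset.in_set1 eq_sym ji /=.
  apply/forallP => k; apply/implyP => ki; rewrite !finset.in_set1 (ordF ki).
  by rewrite (ordF (ltn_trans ki ij)).
Qed.
End Single.

Section Exp.
Local Open Scope classical_set_scope.
Local Open Scope ring_scope.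
Variable R : realType.
Notation mu := (@lebesgue_measure R).
Notation pe := (@exponential_pdf R 1).

Let cexpN : continuous (fun z : R^o => expR (- 1 * z)).
Proof.
move=> z; apply: continuous_comp; last exact: continuous_expR.
by apply: continuousM => //; apply: (@continuousN _ R^o); exact: cst_continuous.
Qed.

Lemma tail_exp (a : R) : 0 <= a ->
  (\int[mu]_(x in `[a, +oo[) (pe x)%:E = (expR (- a))%:E)%E.
Proof.
move=> a0.
rewrite (@ge0_continuous_FTC2y _ _ (fun x => - (expR (- 1 * x))) _ 0)//.
- by rewrite mulN1r EFinN oppeK add0e.
- by move=> x _; apply: exponential_pdf_ge0; exact: ler01.
- apply: (@continuous_subspaceW R^o _ _ [set` `[0, +oo[%R]).
  + by apply: subset_itvr; rewrite bnd_simp.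
  + exact: within_continuous_exponential_pdf.
- rewrite -oppr0; apply: cvgN.
  rewrite (_ : (fun x => expR (- 1 * x)) =
               (fun z => expR (- z)) \o (fun z => 1 * z)); last first.
    by apply: eq_fun => x; rewrite mulNr.
  apply: (@cvg_comp _ _ _ _ _ _ (pinfty_nbhs R)); last exact: cvgr_expR.
  exact: gt0_cvgMry.
- by apply: cvgN; apply/cvg_at_right_filter; exact: cexpN.
- move=> z; rewrite in_itv/= andbT => az.
  by apply: derive1_exponential_pdf; rewrite in_itv/= andbT (le_lt_trans a0 az).
Qed.

Lemma cdf_exp1 (x : R) : 0 <= x -> Defs.cdf (exp1 R) x = 1 - expR (- x).
Proof.
move=> x0; rewrite /Defs.cdf /=.
have := integral_exponential_pdf (@ltr01 R).
rewrite -(setUv `]-oo, x]%classic) ge0_integral_setU//=; last 4 first.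
  exact: measurableC.
  by rewrite setUv; apply/measurable_EFinP; exact: measurable_exponential_pdf.
  by move=> y _; rewrite lee_fin exponential_pdf_ge0// ler01.
  exact/disj_setPCl.
rewrite setCitvl integral_itv_obnd_cbnd; last first.
  by apply/measurable_EFinP; apply: measurable_funTS; exact: measurable_exponential_pdf.
rewrite tail_exp //.
case: (\int[_]_(_ in _) _)%E => [r||] //=.
by rewrite -EFinD => -[<-]; rewrite addrK.
Qed.

Lemma vval_exp1 (x : R) : vval (exp1 R) x = if 0 <= x then x - 1 else x.
Proof.
rewrite /vval; case: ifPn => x0.
  rewrite cdf_exp1 // /= exponential_pdfE // mul1r mulN1r.
  by rewrite subKr divff // gt_eqF // expR_gt0.
rewrite /= lt0_exponential_pdf; last by rewrite ltNge.
by rewrite invr0 mulr0 subr0.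
Qed.
End Exp.

Lemma matroid1 n : is_matroid (@feas1 n).
Proof.
split.
- by rewrite /feas1 finset.cards0.
- by move=> A B /subset_leq_card AB HA; exact: leq_trans AB HA.
- move=> A B HA HB AB.
  have A0 : #|A| = 0%N by apply/eqP; rewrite -leqn0 -ltnS; exact: leq_trans AB HB.
  have : (0 < #|B|)%N by move: AB; rewrite A0.
  case/card_gt0P => x xB; exists x.
  + rewrite finset.in_setD xB andbT; apply/negP => xA.
    have : (0 < #|A|)%N by apply/card_gt0P; exists x.
    by rewrite A0.
  + by rewrite /feas1 (_ : A = finset.set0) ?finset.setU0 ?finset.cards1 //; apply/eqP; rewrite -finset.cards_eq0 A0.
Qed.

Section Strat.
Variable R : realType.

Lemma crit_eq n feas dec (c : 'I_n -> R) rev i a : 0 <= a ->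
  (forall x, 0 <= x -> (i \in alloc feas dec (upd c i x) rev) = (a <= x)) ->
  critical feas dec c rev i = a.
Proof.
move=> a0 h; rewrite /critical.
rewrite (_ : [set x | _]%classic = [set` `[a, +oo[%R]%classic) ?inf_itv //.
apply/seteqP; split => x /=.
  by case=> x0 hx; rewrite in_itv /= andbT -h.
rewrite in_itv /= andbT => ax; have x0 := le_trans a0 ax.
by split => //; rewrite h.
Qed.

Lemma alloc_solo n (rev : {set 'I_n}) i (c : 'I_n -> R) :
  (forall j, j \in rev -> j = i) -> i \in rev ->
  alloc (@feas1 n) (fun _ => exp1 R) c rev =
    if 1 <= c i then [set i] else finset.set0.
Proof.
move=> hj ir; case: ifPn => h.
- apply: alloc_eq; apply: chosen_set1 => //.
    by rewrite vval_exp1 (le_trans ler01 h) subr_ge0.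
  by move=> j /hj ->; rewrite eqxx.
- apply: alloc_eq; apply: chosen_set0 => j /hj ->; rewrite vval_exp1.
  case: ifPn => x0; first by rewrite subr_lt0 ltNge.
  by rewrite ltNge.
Qed.

Definition fk : 'I_2 := @Ordinal 2 1 isT.

Lemma I2 (j : 'I_2) : j = ord0 \/ j = fk.
Proof. by case: j => [[|[|k]] hk] //; [left|right]; apply: val_inj. Qed.

Lemma alloc_A (bb : R) (c : 'I_2 -> R) : 1 <= bb -> c fk = bb ->
  alloc (@feas1 2) (fun _ => exp1 R) c (finset.setT) =
    if bb <= c ord0 then [set ord0] else [set fk].
Proof.
move=> b1 cf; have b0 := le_trans ler01 b1.
case: ifPn => h.
- apply: alloc_eq; apply: chosen_set1 => //.
    by rewrite vval_exp1 (le_trans b0 h) subr_ge0 (le_trans b1 h).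
  move=> j _; case: (I2 j) => -> //; rewrite cf => _.
  rewrite !vval_exp1 b0 (le_trans b0 h) /= andbT orbC -le_eqVlt.
  by rewrite lerD2r.
- apply: alloc_eq; apply: chosen_set1 => //.
    by rewrite cf vval_exp1 b0 subr_ge0.
  move=> j _; case: (I2 j) => -> //; rewrite cf => _.
  rewrite !vval_exp1 b0; move: h; rewrite -ltNge => h.
  case: ifPn => x0; first by rewrite ltrD2r h.
  by rewrite -ltNge in x0; rewrite (lt_le_trans x0) // subr_ge0.
Qed.
End Strat.

Section Rev.
Variable R : realType.

Lemma rev_honest (f v : R) : revenue (honest R) f v = if 1 <= v then 1 else 0.
Proof.
rewrite /revenue /real_payment /allocation /revealed /concealed /=.
rewrite finset.set0D finset.cards0 mulr0 subr0 finset.setC0.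
have HA : forall c : 'I_1 -> R,
    alloc (fun S : {set 'I_1} => (#|S| <= 1)%N) (fun _ => exp1 R) c finset.setT =
    if 1 <= c ord0 then [set ord0] else finset.set0.
  by move=> c; apply: alloc_solo => [j _|]; [exact: ord1|exact: finset.in_setT].
rewrite HA /bids /=.
case: (boolP (1 <= v)) => v1; last by rewrite finset.in_set0.
rewrite finset.set11; apply: crit_eq => // x x0.
by rewrite HA /upd eqxx; case: ifP => _; rewrite ?finset.set11 ?finset.in_set0.
Qed.

Variable eps : R.
Hypothesis heps : 0 < eps.
Definition bb : R := 1 + eps / 2.
Lemma bb1 : 1 <= bb.
Proof. by rewrite /bb lerDl divr_ge0 // ltW. Qed.
Lemma bb_ge0 : 0 <= bb.
Proof. exact: le_trans ler01 bb1. Qed.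

Definition conc (v : R) : {set 'I_2} :=
  if (1 <= v) && (v < bb) then [set fk] else finset.set0.

Definition ours : strategy R :=
  @Strategy R 2 ord0 (fun _ => bb) (fun _ => bb_ge0) (fun _ => exp1 R)
    (@feas1 2) (@matroid1 2) conc.

Definition rs (v : R) : R := if 1 <= v then (if v < bb then eps else bb) else 0.

Lemma rev_ours v : revenue ours (1 - eps) v = rs v.
Proof.
rewrite /revenue /real_payment /allocation /revealed /concealed /= /conc /rs.
have fk0 : fk != ord0 by [].
case: (boolP ((1 <= v) && (v < bb))) => hc.
- have -> : [set fk] :\ ord0 = [set fk].
    by apply/finset.setP => j; rewrite !finset.inE; case: eqP => // ->.
  have HB : forall c : 'I_2 -> R,
      alloc (@feas1 2) (fun _ => exp1 R) c (~: [set fk]) =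
      if 1 <= c ord0 then [set ord0] else finset.set0.
    move=> c; apply: alloc_solo => [j|].
      by rewrite finset.in_setC finset.in_set1; case: (I2 j) => -> //; rewrite eqxx.
    by rewrite finset.in_setC finset.in_set1.
  case/andP: hc => v1 vb.
  rewrite HB /bids /= v1 vb finset.set11 finset.cards1.
  rewrite (@crit_eq _ _ _ _ _ _ _ 1) //; first by rewrite mulr1n mulr1 opprB addrC subrK.
  move=> x x0; rewrite HB /upd eqxx.
  by case: ifP => _; rewrite ?finset.set11 ?finset.in_set0.
- rewrite finset.set0D finset.cards0 mulr0 subr0 finset.setC0.
  have HA : forall c : 'I_2 -> R, c fk = bb ->
      alloc (@feas1 2) (fun _ => exp1 R) c finset.setT =
      if bb <= c ord0 then [set ord0] else [set fk].
    by move=> c cf; apply: alloc_A => //; exact: bb1.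
  rewrite HA /bids /= ?eqxx //.
  case: (boolP (bb <= v)) => vb.
    rewrite finset.set11 (le_trans bb1 vb) ltNge vb /=.
    apply: crit_eq => [|x x0]; first exact: bb_ge0.
    by rewrite HA /upd ?eqxx //; case: ifP => _; rewrite ?finset.set11 ?finset.in_set1.
  rewrite finset.in_set1 eq_sym (negbTE fk0).
  move: hc; rewrite -ltNge in vb; rewrite vb andbT => /negbTE -> //.
Qed.

Lemma feas_ours : true_feasible ours.
Proof.
move=> v _; apply: leq_trans (subset_leq_card (finset.subsetIr _ _)) _.
by rewrite finset.cards1.
Qed.
End Rev.

Section Integ.
Local Open Scope classical_set_scope.
Local Open Scope ring_scope.
Variable R : realType.
Notation mu := (@lebesgue_measure R).
Notation pe := (@exponential_pdf R 1).
Variable eps : R.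
Hypothesis heps : 0 < eps.

Lemma rsE : rs eps =1 (fun v => eps * \1_(`[1, bb eps[) v + bb eps * \1_(`[bb eps, +oo[) v).
Proof.
move=> v; rewrite /rs !indicE !mem_setE !in_itv /= andbT.
have b1 := bb1 heps.
case: (boolP (1 <= v)) => v1 /=.
  case: (boolP (v < bb eps)) => vb /=.
    have -> : (bb eps <= v) = false by apply/negbTE; rewrite -ltNge.
    by rewrite /= ?mulr1n ?mulr0n ?mulr1 ?mulr0 ?addr0 ?add0r.
  have -> : (bb eps <= v) by rewrite leNgt.
  by rewrite /= ?mulr1n ?mulr0n ?mulr1 ?mulr0 ?addr0 ?add0r.
have -> : (bb eps <= v) = false.
  by apply/negbTE; apply: contra v1 => h; exact: le_trans b1 h.
by rewrite /= ?mulr1n ?mulr0n ?mulr1 ?mulr0 ?addr0 ?add0r.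
Qed.

Lemma meas_rs : measurable_fun [set: R] (rs eps).
Proof.
rewrite (funext rsE); apply: measurable_funD; apply: measurable_funM => //;
  exact: measurable_indic.
Qed.

Lemma disj_split (a b : R) :
  [disjoint [set` `[a, b[] & [set` `[b, +oo[]].
Proof.
rewrite disj_set2E; apply/eqP; apply/seteqP; split => // x /= [].
rewrite !in_itv /= andbT => /andP[_ xb] bx.
by move: (lt_le_trans xb bx); rewrite ltxx.
Qed.

Lemma Jval : (\int[mu]_(v in `[1%R, bb eps[) (pe v)%:E)%E =
   (expR (-1) - expR (- bb eps))%:E.
Proof.
have b1 := bb1 heps.
have := @tail_exp R 1 ler01.
rewrite (@itv_bndbnd_setU _ R (BLeft 1) (BLeft (bb eps))) ?bnd_simp //.
rewrite ge0_integral_setU //=; last 3 first.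
- apply/measurable_EFinP; apply: measurable_funTS.
  exact: measurable_exponential_pdf.
- by move=> y _; rewrite lee_fin exponential_pdf_ge0 // ler01.
- exact: disj_split.
rewrite tail_exp; last exact: le_trans ler01 b1.
case: (\int[_]_(_ in _) _)%E => [r||] //=.
by rewrite -EFinD => -[<-]; rewrite addrK.
Qed.

Lemma erev_honest (f : R) : exp_revenue (honest R) f = (expR (-1))%:E.
Proof.
rewrite /exp_revenue -(@tail_exp R 1 ler01) [RHS]integral_mkcond.
apply: eq_integral => v _; rewrite rev_honest patchE mem_setE in_itv /= andbT.
by case: ifP => _; rewrite ?mul1r ?mul0r.
Qed.

Lemma erev_ours : exp_revenue (ours heps) (1 - eps) =
  (eps * (expR (-1) - expR (- bb eps)) + bb eps * expR (- bb eps))%:E.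
Proof.
have b1 := bb1 heps.
rewrite /exp_revenue.
transitivity (\int[mu]_(v in `[1%R, +oo[) ((rs eps v) * pe v)%:E)%E.
  rewrite [RHS]integral_mkcond; apply: eq_integral => v _.
  rewrite rev_ours patchE mem_setE in_itv /= andbT /rs.
  by case: ifP => _; rewrite ?mul0r.
rewrite (@itv_bndbnd_setU _ R (BLeft 1) (BLeft (bb eps))) ?bnd_simp //.
rewrite ge0_integral_setU //=; last 3 first.
- apply/measurable_EFinP; apply: measurable_funTS.
  apply: measurable_funM; [exact: meas_rs|exact: measurable_exponential_pdf].
- move=> y _; rewrite lee_fin mulr_ge0 ?exponential_pdf_ge0 ?ler01 // /rs.
  case: ifP => _ //; case: ifP => _; [exact: ltW|exact: le_trans ler01 b1].
- exact: disj_split.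
- have mpe : forall D : set R, measurable_fun D (fun x => (pe x)%:E).
  move=> D; apply/measurable_EFinP; apply: measurable_funTS.
  exact: measurable_exponential_pdf.
have pe0 : forall (D : set R) y, D y -> (0 <= (pe y)%:E)%E.
  by move=> D y _; rewrite lee_fin exponential_pdf_ge0 // ler01.
have HE1 : (\int[mu]_(x in `[1%R, bb eps[) (rs eps x * pe x)%:E =
    eps%:E * \int[mu]_(x in `[1%R, bb eps[) (pe x)%:E)%E.
  rewrite -ge0_integralZl_EFin //; try exact: ltW; try exact: pe0; try exact: mpe.
  apply: eq_integral => v; rewrite mem_setE in_itv /= => /andP[v1 vb].
  by rewrite /rs v1 vb EFinM.
have HE2 : (\int[mu]_(x in `[bb eps, +oo[) (rs eps x * pe x)%:E =
    (bb eps)%:E * \int[mu]_(x in `[bb eps, +oo[) (pe x)%:E)%E.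
  rewrite -ge0_integralZl_EFin //; try exact: (le_trans ler01 b1); try exact: pe0; try exact: mpe.
  apply: eq_integral => v; rewrite mem_setE in_itv /= andbT => bv.
  by rewrite /rs (le_trans b1 bv) ltNge bv EFinM.
rewrite HE1 HE2 Jval tail_exp; last exact: le_trans ler01 b1.
by rewrite -!EFinM -EFinD.
Qed.
End Integ.

End Helpers.
Import Helpers.

Lemma key (R : realType) (eps x : R) : 0 < eps -> 1 - eps / 2 <= x -> x <= 1 ->
  1 < eps * (1 - x) + (1 + eps / 2) * x.
Proof.
move=> he h1 h2.
have hd : 0 < eps / 2 by rewrite divr_gt0.
case: (leP 1 eps) => he1.
  have : 0 <= (eps - 1) * (1 - x) by rewrite mulr_ge0 // subr_ge0.
  nra.
have : 0 <= (1 - eps) * (x - (1 - eps / 2)) by rewrite mulr_ge0 // subr_ge0 // ltW.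
nra.
Qed.

Theorem mainTheorem7 (R : realType) (eps : R) (heps : 0 < eps) :
  ~ credible (1 - eps).
Proof.
move=> hc.
have := hc (ours heps) (feas_ours heps).
rewrite (funext (rev_ours heps)) erev_ours erev_honest lee_fin => /(_ (meas_rs heps)).
apply/negP; rewrite -ltNge /bb opprD expRD.
set e1 := expR (-1); set x := expR (- (eps / 2)).
have e10 : 0 < e1 by exact: expR_gt0.
have hx1 : 1 - eps / 2 <= x by rewrite /x -[1 - _]/(1 + - (eps / 2)) expR_ge1Dx.
have hx2 : x <= 1 by rewrite /x expR_le1 oppr_le0 divr_ge0 // ltW.
have := @key R eps x heps hx1 hx2.
move=> k.
have -> : eps * (e1 - e1 * x) + (1 + eps / 2) * (e1 * x) =
  e1 * (eps * (1 - x) + (1 + eps / 2) * x) by ring.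
by rewrite -[X in X < _]mulr1 ltr_pM2l.
Qed.
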